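(* Let $A,B,B'$ be clusterings of $\{1,\dots,n\}$. Then $B'$ is an $A$-consistent improvement of $B$ if and only if $B'\neq B$ and $B'$ can be obtained from $B$ by a finite sequence of perfect splits and perfect merges (each taken with respect to $A$).
   Context: A clustering of $\{1,\dots,n\}$ is a partition into nonempty disjoint clusters. A pair of distinct elements is an intra-cluster pair of a clustering if both lie in the same cluster, and an inter-cluster pair otherwise. A pair agrees in clusterings $A$ and $B$ if it is intra-cluster in both or inter-cluster in both. $B'$ is an $A$-consistent improvement of $B$ if $B\neq B'$ and every pair of elements that agrees in $A$ and $B$ also agrees in $A$ and $B'$. $B'$ is a perfect split of $B$ (w.r.t. $A$) if $B'$ is obtained from $B$ by splitting one cluster $B_1$ into two nonempty clusters $B_1',B_2'$ such that for every cluster $A_i$ of $A$, $A_i\cap B_1$ is contained in $B_1'$ or in $B_2'$. $B'$ is a perfect merge of $B$ (w.r.t. $A$) if there is a cluster $A_i$ of $A$ and two distinct clusters $B_1,B_2\subseteq A_i$ of $B$ such that $B'$ is obtained from $B$ by merging $B_1$ and $B_2$ into one cluster. *)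

(* Defs.v *)
(* Elements {1..n} are represented by 'I_n. *)
From HB Require Import structures.
From Stdlib Require Import Relations.
From mathcomp Require Import all_boot.
Set Implicit Arguments. Unset Strict Implicit. Unset Printing Implicit Defensive.

Definition clustering (n : nat) (P : {set {set 'I_n}}) : bool :=
  partition P [set: 'I_n].

Definition intra (n : nat) (P : {set {set 'I_n}}) (x y : 'I_n) : bool :=
  [exists C in P, (x \in C) && (y \in C)].

Definition agrees (n : nat) (A B : {set {set 'I_n}}) (x y : 'I_n) : bool :=
  intra A x y == intra B x y.

Definition consistent_improvement (n : nat) (A B B' : {set {set 'I_n}}) : Prop :=
  B != B' /\
  forall x y : 'I_n, x != y -> agrees A B x y -> agrees A B' x y.

Definition perfect_split (n : nat) (A B B' : {set {set 'I_n}}) : Prop :=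
  exists B1 B1' B2' : {set 'I_n},
    [/\ B1 \in B, (B1' != set0) && (B2' != set0),
        [disjoint B1' & B2'] && (B1' :|: B2' == B1),
        B' = B1' |: (B2' |: (B :\ B1)) &
        forall Ai, Ai \in A -> (Ai :&: B1 \subset B1') || (Ai :&: B1 \subset B2')].

Definition perfect_merge (n : nat) (A B B' : {set {set 'I_n}}) : Prop :=
  exists Ai B1 B2 : {set 'I_n},
    [/\ Ai \in A, (B1 \in B) && (B2 \in B), B1 != B2,
        (B1 \subset Ai) && (B2 \subset Ai) &
        B' = (B1 :|: B2) |: ((B :\ B1) :\ B2)].

Definition perfect_step (n : nat) (A : {set {set 'I_n}}) : relation {set {set 'I_n}} :=
  fun B B' => perfect_split A B B' \/ perfect_merge A B B'.

(* Main.v *)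
Require Import Defs.
From Stdlib Require Import Relations.
From mathcomp Require Import all_boot.
Set Implicit Arguments. Unset Strict Implicit. Unset Printing Implicit Defensive.


Section S_T.
Variable n : nat.
Implicit Types (P Q : {set {set 'I_n}}) (x y : 'I_n).

Lemma intraP P x y :
  reflect (exists D, [/\ D \in P, x \in D & y \in D]) (intra P x y).
Proof.
apply: (iffP existsP) => [[D /andP [HD /andP [hx hy]]] | [D [HD hx hy]]];
  exists D; [by [] | by rewrite HD hx hy].
Qed.

Lemma clusteringP P : clustering P <->
  [/\ set0 \notin P, (forall x, exists D, D \in P /\ x \in D) &
      (forall x D E, D \in P -> E \in P -> x \in D -> x \in E -> D = E)].
Proof.
split.
- move/and3P=> [/eqP Hc /trivIsetP Ht H0]; split => //.
  + move=> x; have : x \in cover P by rewrite Hc inE.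
    by move/bigcupP=> [D HD hx]; exists D.
  + move=> x D E HD HE hD hE; case: (eqVneq D E) => // neq.
    by have := disjointFr (Ht D E HD HE neq) hD; rewrite hE.
- move=> [H0 Hc Hu]; apply/and3P; split => //.
  + apply/eqP/setP=> x; rewrite inE; apply/bigcupP.
    by have [D [HD hx]] := Hc x; exists D.
  + apply/trivIsetP => D E HD HE neq; apply/pred0P => z /=.
    apply/negbTE/andP=> [[hD hE]]; by rewrite (Hu z D E) ?eqxx in neq.
Qed.

End S_T.

Section S_T2.
Variable n : nat.
Implicit Types (P Q A B C : {set {set 'I_n}}) (x y : 'I_n).

Lemma split_mono A B C : perfect_split A B C -> forall x y, agrees A B x y -> agrees A C x y.
Proof.
move=> [B1 [B1' [B2' [HB1 _ /andP [Hdis /eqP HU] -> Hperf]]]] x y.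
rewrite /agrees => /eqP hA; rewrite hA.
case hB: (intra B x y); last first.
  rewrite eq_sym eqbF_neg; apply/negP => /intraP -[D [HD hx hy]]; move: HD.
  rewrite !inE => /or3P [/eqP E|/eqP E|/andP [_ HD]];
    move/intraP: hB; apply; [exists B1 | exists B1 | exists D]; rewrite ?E in hx hy => //;
    by rewrite HB1 -HU !inE ?hx ?hy ?orbT.
have hA' : intra A x y by rewrite hA hB.
move/intraP: hB => [D [HD hx hy]]; case: (eqVneq D B1) => [E|neq]; last first.
  by rewrite eq_sym eqb_id; apply/intraP; exists D; rewrite !inE neq HD !orbT.
move: E hx hy => -> hx hy.
have [Ai [HAi xA yA]] : exists Ai, [/\ Ai \in A, x \in Ai & y \in Ai].
  by move/intraP: hA'.
have xs : x \in Ai :&: B1 by rewrite inE xA hx.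
have ys : y \in Ai :&: B1 by rewrite inE yA hy.
rewrite eq_sym eqb_id; apply/intraP.
case/orP: (Hperf Ai HAi) => /subsetP Hs.
- by exists B1'; split; rewrite ?inE ?eqxx //; apply: Hs.
- by exists B2'; split; rewrite ?inE ?eqxx ?orbT //; apply: Hs.
Qed.

Lemma merge_mono A B C : perfect_merge A B C -> forall x y, agrees A B x y -> agrees A C x y.
Proof.
move=> [Ai [B1 [B2 [HAi /andP [H1 H2] neq /andP [S1 S2] ->]]]] x y.
rewrite /agrees => /eqP hA; rewrite hA.
case hB: (intra B x y).
  move/intraP: hB => [D [HD hx hy]]; rewrite eq_sym eqb_id; apply/intraP.
  case: (eqVneq D B1) => [E|n1]; first by subst; exists (B1 :|: B2); rewrite !inE eqxx hx hy.
  case: (eqVneq D B2) => [E|n2]; first by subst; exists (B1 :|: B2); rewrite !inE eqxx hx hy !orbT.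
  by exists D; rewrite !inE n1 n2 HD !orbT.
rewrite eq_sym eqbF_neg; apply/negP => /intraP -[D [HD hx hy]]; move: HD.
rewrite !inE => /orP [/eqP E|/and3P [n2 n1 HD]].
- subst D. have : intra A x y.
    apply/intraP; exists Ai; split => //.
    by case/setUP: hx => h; [apply: (subsetP S1)|apply: (subsetP S2)].
    by case/setUP: hy => h; [apply: (subsetP S1)|apply: (subsetP S2)].
  by rewrite hA hB.
- by move: hB; rewrite (introT (intraP _ _ _)) //; exists D.
Qed.

Lemma step_mono A B C : perfect_step A B C -> forall x y, agrees A B x y -> agrees A C x y.
Proof. by case; [apply: split_mono|apply: merge_mono]. Qed.

Lemma rt_mono A B C : clos_refl_trans _ (perfect_step A) B C ->
  forall x y, agrees A B x y -> agrees A C x y.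
Proof.
elim=> [B0 C0 H|B0|B0 C0 D0 _ IH1 _ IH2] x y; first exact: step_mono.
- by [].
- by move=> h; apply: IH2; apply: IH1.
Qed.
End S_T2.

Section S_T3.
Variable n : nat.
Implicit Types (P Q A B C : {set {set 'I_n}}) (x y z : 'I_n).

Lemma intra_refl P x : clustering P -> intra P x x.
Proof. move/clusteringP=> [_ Hc _]; have [D [HD hx]] := Hc x; by apply/intraP; exists D. Qed.

Lemma intra_sym P x y : intra P x y = intra P y x.
Proof. by apply/intraP/intraP => -[D [HD h1 h2]]; exists D. Qed.

Lemma intra_trans P x y z : clustering P -> intra P x y -> intra P y z -> intra P x z.
Proof.
move/clusteringP=> [_ _ Hu] /intraP [D [HD h1 h2]] /intraP [E [HE h3 h4]].
apply/intraP; exists D; split => //; by rewrite (Hu y D E).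
Qed.

Lemma cl_sub P Q : clustering P -> clustering Q -> (forall x y, intra P x y = intra Q x y) ->
  P \subset Q.
Proof.
move=> /clusteringP [P0 Pc Pu] /clusteringP [Q0 Qc Qu] H; apply/subsetP => D HD.
have /set0Pn [x hx] : D != set0 by apply: contraNneq P0 => <-.
have [E [HE xE]] := Qc x.
suff -> : D = E by [].
apply/setP => z; apply/idP/idP => hz.
- have /intraP [F [HF h1 h2]] : intra Q x z by rewrite -H; apply/intraP; exists D.
  by rewrite (Qu x E F).
- have /intraP [F [HF h1 h2]] : intra P x z by rewrite H; apply/intraP; exists E.
  by rewrite (Pu x D F).
Qed.

Lemma cl_eq P Q : clustering P -> clustering Q -> (forall x y, intra P x y = intra Q x y) ->
  P = Q.
Proof.
move=> hP hQ H; apply/eqP; rewrite eqEsubset !cl_sub // => x y; by rewrite H.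
Qed.

Definition dist B B' := #|[set p : 'I_n * 'I_n | intra B p.1 p.2 != intra B' p.1 p.2]|.

Definition between B B' C := forall u v, intra B u v = intra B' u v -> intra C u v = intra B u v.

Lemma dist_lt B B' C x y : between B B' C -> intra C x y != intra B x y ->
  dist C B' < dist B B'.
Proof.
move=> Hb Hxy; apply: proper_card; apply/properP; split.
- apply/subsetP => -[u v]; rewrite !inE /=; apply: contraNN => /eqP e.
  by rewrite Hb // e.
- have hne : intra B x y != intra B' x y.
    by apply: contraNneq Hxy => e; rewrite Hb.
  exists (x, y); rewrite !inE /= //.
  by move: Hxy hne; case: (intra B x y); case: (intra C x y); case: (intra B' x y).
Qed.

Definition cons A B B' := forall x y, x != y -> agrees A B x y -> agrees A B' x y.

Lemma cons_between A B B' C : between B B' C -> cons A B B' -> cons A C B'.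
Proof.
move=> Hb Hc x y nxy; have := Hc x y nxy; have := Hb x y; rewrite /agrees.
by case: (intra A x y); case: (intra B x y); case: (intra C x y); case: (intra B' x y);
  move=> h1 h2 //; (try by move/(_ erefl): h1); move/(_ erefl): h2.
Qed.

End S_T3.

Section S_T4.
Variable n : nat.
Implicit Types (P Q A B C : {set {set 'I_n}}) (x y z : 'I_n).

Lemma split_exists A B B' x y : clustering A -> clustering B -> clustering B' ->
  cons A B B' -> intra B x y -> ~~ intra B' x y ->
  exists C, [/\ clustering C, perfect_step A B C, between B B' C & intra C x y != intra B x y].
Proof.
move=> hA hB hB' Hc /intraP [X [HX xX yX]] nB'.
have /clusteringP [B0 Bc Bu] := hB.
have /clusteringP [B'0 B'c B'u] := hB'.
have [Y [HY xY]] := B'c x.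
have yY : y \notin Y by apply: contra nB' => yY; apply/intraP; exists Y.
set X1 := X :&: Y; set X2 := X :\: Y.
set C := X1 |: (X2 |: (B :\ X)).
have key : forall D z, D \in B -> D != X -> z \in D -> z \notin X.
  move=> D z HD nDX zD; apply: contra nDX => zX; apply/eqP; exact: (Bu z D X).
have CB : forall u v, intra C u v -> intra B u v.
  move=> u v /intraP [D [HD hu hv]]; apply/intraP; move: HD; rewrite !inE.
  case/or3P => [/eqP E|/eqP E|/andP [_ HD]].
  - by exists X; move: hu hv; rewrite E !inE => /andP [-> _] /andP [-> _].
  - by exists X; move: hu hv; rewrite E !inE => /andP [_ ->] /andP [_ ->].
  - by exists D.
have BC : forall u v, intra B u v -> ~~ intra C u v -> ~~ intra B' u v.
  move=> u v /intraP [D [HD hu hv]] nC.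
  case: (eqVneq D X) => [E|nDX]; last first.
    by move/negP: nC; case; apply/intraP; exists D; rewrite !inE nDX HD !orbT.
  rewrite E in hu hv.
  apply/negP => /intraP [E' [HE' hu' hv']].
  case hu1: (u \in Y); case hv1: (v \in Y).
  - by move/negP: nC; case; apply/intraP; exists X1; rewrite !inE eqxx hu hv hu1 hv1.
  - by move: hv1; rewrite -(B'u u E' Y) // hv'.
  - by move: hu1; rewrite -(B'u v E' Y) // hu'.
  - by move/negP: nC; case; apply/intraP; exists X2; rewrite !inE eqxx hu hv hu1 hv1 orbT.
exists C; split.
- apply/clusteringP; split.
  + rewrite !inE !negb_or; apply/and3P; split.
    * by apply/eqP => /setP /(_ x); rewrite !inE xX xY.
    * by apply/eqP => /setP /(_ y); rewrite !inE yX (negbTE yY).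
    * by rewrite negb_and B0 orbT.
  + move=> z; case zX: (z \in X).
    * case zY: (z \in Y); [exists X1 | exists X2]; by rewrite !inE ?eqxx ?zX ?zY ?orbT.
    * have [D [HD zD]] := Bc z; exists D; split => //; rewrite !inE HD andbT.
      apply/orP; right; apply/orP; right; apply: contraFneq zX => E; by rewrite -E.
  + move=> z D E; rewrite !inE => HD HE hD hE.
    case/or3P: HD => [/eqP ED|/eqP ED|/andP [nD HD]]; case/or3P: HE => [/eqP EE|/eqP EE|/andP [nE HE]];
      rewrite ?ED ?EE //; rewrite ?ED ?EE /X1 /X2 ?inE in hD hE.
    * by case/andP: hD => _ h; case/andP: hE; rewrite h.
    * by case/andP: hD => h _; move: (key _ _ HE nE hE); rewrite h.
    * by case/andP: hD => h _; case/andP: hE => _; rewrite (negbTE h).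
    * by case/andP: hD => _ h; move: (key _ _ HE nE hE); rewrite h.
    * by case/andP: hE => h _; move: (key _ _ HD nD hD); rewrite h.
    * by case/andP: hE => _ h; move: (key _ _ HD nD hD); rewrite h.
    * exact: (Bu z).
- left; exists X, X1, X2; split => //.
  + apply/andP; split.
    * by apply/set0Pn; exists x; rewrite !inE xX xY.
    * by apply/set0Pn; exists y; rewrite !inE yX yY.
  + apply/andP; split.
    * by apply/pred0P => z /=; rewrite !inE; case: (z \in Y); rewrite ?andbF.
    * by apply/eqP/setP => z; rewrite !inE; case: (z \in Y); case: (z \in X).
  + move=> Ai HAi; case: (boolP (Ai :&: X \subset X1)) => //= /subsetPn [u hu nu].
    apply/subsetP => v hv; move: hu hv nu; rewrite !inE => /andP [uA uX] /andP [vA vX].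
    rewrite uX /= => uY; rewrite vX andbT; apply/negP => vY.
    have nuv : u != v by apply/eqP => e; move: uY; rewrite e vY.
    have := Hc u v nuv; rewrite /agrees.
    have -> : intra A u v by apply/intraP; exists Ai.
    have -> : intra B u v by apply/intraP; exists X.
    move/(_ erefl)/eqP/esym/intraP => [E [HE hu hv]].
    by move: uY; rewrite -(B'u v E Y) // hu.
- move=> u v; move: (CB u v) (BC u v).
  case: (intra B u v); case: (intra C u v); case: (intra B' u v) => h1 h2 h3 //;
    by [move: (h1 isT) | move: (h2 isT isT)].
- have -> : intra B x y by apply/intraP; exists X.
  suff /negbTE -> : ~~ intra C x y by [].
  apply/negP => /intraP [D [HD hx hy]]; move: HD; rewrite !inE.
  case/or3P => [/eqP E|/eqP E|/andP [nD HD]].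
  + by move: hy; rewrite E !inE (negbTE yY) andbF.
  + by move: hx; rewrite E !inE xY.
  + by move: (key _ _ HD nD hx); rewrite xX.
Qed.
End S_T4.

Section S_T5.
Variable n : nat.
Implicit Types (P Q A B C : {set {set 'I_n}}) (x y z : 'I_n).

Lemma merge_exists A B B' x y : clustering A -> clustering B -> clustering B' ->
  cons A B B' -> (forall u v, intra B u v -> intra B' u v) ->
  intra B' x y -> ~~ intra B x y ->
  exists C, [/\ clustering C, perfect_step A B C, between B B' C & intra C x y != intra B x y].
Proof.
move=> hA hB hB' Hc Hsub xyB' nxyB.
have /clusteringP [A0 Ac Au] := hA.
have /clusteringP [B0 Bc Bu] := hB.
have [X [HX xX]] := Bc x.
have [Z [HZ yZ]] := Bc y.
have nXZ : X != Z.
  by apply: contraNneq nxyB => E; apply/intraP; exists X; split => //; rewrite E.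
have toA : forall u w, intra B' u w -> ~~ intra B u w -> intra A u w.
  move=> u w h1 h2; have nuw : u != w.
    by apply: contraNneq h2 => ->; apply: intra_refl.
  have := Hc u w nuw; rewrite /agrees.
  case: (intra A u w) => //; rewrite (negbTE h2) h1 => /(_ erefl).
  by [].
have [Ai [HAi xA yA]] : exists Ai, [/\ Ai \in A, x \in Ai & y \in Ai].
  by apply/intraP; apply: toA.
have inB : forall u D, D \in B -> x \in D -> u \in D -> intra B x u.
  by move=> u D HD h1 h2; apply/intraP; exists D.
have key : forall D z, D \in B -> z \in D -> z \in X -> D = X.
  by move=> D z HD h1 h2; apply: (Bu z).
have XA : forall u, u \in X -> u \in Ai.
  move=> u uX.
  have nuy : ~~ intra B u y.
    apply: contra nxyB => /intraP [D [HD hu hy]].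
    by apply/intraP; exists X; split => //; rewrite -(key D u).
  have uy' : intra B' u y.
    apply: intra_trans hB' _ xyB'; rewrite intra_sym; apply: Hsub; exact: (inB _ X).
  have /intraP [E [HE hu hy]] := toA _ _ uy' nuy.
  by rewrite (Au y Ai E).
have ZA : forall u, u \in Z -> u \in Ai.
  move=> u uZ.
  have nux : ~~ intra B u x.
    apply: contra nxyB => /intraP [D [HD hu hx]].
    by apply/intraP; exists Z; split => //; rewrite -(Bu u D Z).
  have ux' : intra B' u x.
    rewrite intra_sym; apply: intra_trans hB' xyB' _; apply: Hsub.
    by apply/intraP; exists Z.
  have /intraP [E [HE hu hx]] := toA _ _ ux' nux.
  by rewrite (Au x Ai E).
set C := (X :|: Z) |: ((B :\ X) :\ Z).
have BC : forall u v, intra B u v -> intra C u v.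
  move=> u v /intraP [D [HD hu hv]]; apply/intraP.
  case: (eqVneq D X) => [E|n1]; first by exists (X :|: Z); rewrite !inE eqxx -E hu hv.
  case: (eqVneq D Z) => [E|n2]; first by exists (X :|: Z); rewrite !inE eqxx -E hu hv !orbT.
  by exists D; rewrite !inE n1 n2 HD !orbT.
have XZB' : forall u, u \in X :|: Z -> intra B' x u.
  move=> u; rewrite inE => /orP [uX|uZ].
  - by apply: Hsub; exact: (inB _ X).
  - apply: intra_trans hB' xyB' _; apply: Hsub; by apply/intraP; exists Z.
have CB' : forall u v, intra C u v -> ~~ intra B u v -> intra B' u v.
  move=> u v /intraP [D [HD hu hv]] nB; move: HD; rewrite !inE => /orP [/eqP E|/and3P [n2 n1 HD]].
  - rewrite E in hu hv; apply: intra_trans hB' _ (XZB' v hv); rewrite intra_sym; exact: XZB'.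
  - by move/negP: nB; case; apply/intraP; exists D.
have notXZ : forall D z, D \in B -> z \in D -> D != X -> D != Z -> z \notin X :|: Z.
  move=> D z HD zD n1 n2; rewrite inE negb_or; apply/andP; split.
  - by apply: contra n1 => zX; apply/eqP; apply: (Bu z).
  - by apply: contra n2 => zZ; apply/eqP; apply: (Bu z).
exists C; split.
- apply/clusteringP; split.
  + rewrite !inE negb_or; apply/andP; split.
    * by apply/eqP => /setP /(_ x); rewrite !inE xX.
    * by rewrite (negbTE B0) !andbF.
  + move=> z; case zXZ: (z \in X :|: Z); first by exists (X :|: Z); rewrite zXZ !inE eqxx.
    have [D [HD zD]] := Bc z; exists D; split => //; rewrite !inE HD andbT.
    apply/orP; right; apply/andP; split.
    * by apply: contraFneq zXZ => E; rewrite inE -E zD orbT.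
    * by apply: contraFneq zXZ => E; rewrite inE -E zD.
  + move=> z D E; rewrite !inE => HD HE hD hE.
    case/orP: HD => [/eqP ED|/and3P [n2 n1 HD]]; case/orP: HE => [/eqP EE|/and3P [n2' n1' HE]].
    * by rewrite ED EE.
    * by move: (notXZ _ _ HE hE n1' n2'); rewrite -ED hD.
    * by move: (notXZ _ _ HD hD n1 n2); rewrite -EE hE.
    * exact: (Bu z).
- right; exists Ai, X, Z; split => //; first by rewrite HX HZ.
  by apply/andP; split; apply/subsetP.
- move=> u v; move: (BC u v) (CB' u v).
  case: (intra B u v); case: (intra C u v); case: (intra B' u v) => h1 h2 h3 //;
    by [move: (h1 isT) | move: (h2 isT isT)].
- have -> : intra C x y by apply/intraP; exists (X :|: Z); rewrite !inE eqxx xX yZ orbT.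
  by rewrite (negbTE nxyB).
Qed.
End S_T5.

Lemma main_rt (n : nat) (A B' : {set {set 'I_n}}) : clustering A -> clustering B' ->
  forall k B, dist B B' < k -> clustering B -> cons A B B' ->
  clos_refl_trans _ (perfect_step A) B B'.
Proof.
move=> hA hB'; elim=> [//|k IH] B hd hB hc.
case: (boolP [forall x, forall y, intra B x y == intra B' x y]) =>
  [/forallP H | /forallPn [x /forallPn [y hxy]]].
  have E : B = B'.
    by apply: cl_eq => // u v; move/forallP: (H u) => /(_ v) /eqP.
  rewrite E; exact: rt_refl.
have [C [u0 [v0 [hC st bet diff]]]] : exists C u0 v0, [/\ clustering C, perfect_step A B C,
    between B B' C & intra C u0 v0 != intra B u0 v0].
  case: (boolP [exists u, exists v, intra B u v && ~~ intra B' u v]) =>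
    [/existsP [u /existsP [v /andP [h1 h2]]] | /existsPn Hs].
    have [C HC] := split_exists hA hB hB' hc h1 h2; by exists C, u, v.
  have Hsub : forall u v, intra B u v -> intra B' u v.
    move=> u v h; move/existsPn: (Hs u) => /(_ v); by rewrite h /= negbK.
  have h1 : intra B' x y && ~~ intra B x y.
    by move: hxy (Hsub x y); case: (intra B x y); case: (intra B' x y) => // _ /(_ isT).
  case/andP: h1 => h1 h2.
  have [C HC] := merge_exists hA hB hB' hc Hsub h1 h2; by exists C, x, y.
apply: rt_trans (rt_step _ _ _ _ st) _.
apply: IH => //; last exact: cons_between bet hc.
exact: leq_trans (dist_lt bet diff) hd.
Qed.

Theorem theorem2 (n : nat) (A B B' : {set {set 'I_n}}) :
  clustering A -> clustering B -> clustering B' ->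
  (consistent_improvement A B B' <->
   B' != B /\ clos_refl_trans {set {set 'I_n}} (perfect_step A) B B').
Proof.
move=> hA hB hB'; split.
- move=> [neq Hc]; split; first by rewrite eq_sym.
  exact: (main_rt hA hB' (ltnSn _) hB Hc).
- move=> [neq rt]; split; first by rewrite eq_sym.
  move=> x y _; exact: rt_mono rt x y.
Qed.
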